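(* Let $\mu,\delta>0$. Then (a) $xy\le x\exp\big(x^\delta/\mu^\delta\big)+\mu\,y(\ln(1+y))^{1/\delta}$ for all $x,y\ge0$; (b) $xy\le x\exp\big((\ln(1+x))^\delta/\mu^\delta\big)+y\exp\big(\mu(\ln(1+y))^{1/\delta}\big)$ for all $x,y\ge0$. Furthermore, for each $q>1$ and $\varepsilon>0$ there is a constant $C_{q,\varepsilon,\mu,\delta}>0$ depending only on $(q,\varepsilon,\mu,\delta)$ such that (c) $xy\le\varepsilon\exp\big(qx^\delta/\mu^\delta\big)+\mu\,y(\ln(1+y))^{1/\delta}+C_{q,\varepsilon,\mu,\delta}$ for all $x,y\ge0$, and (d) in the case $\delta>1$, $xy\le\varepsilon\exp\big(q(\ln(1+x))^\delta/\mu^\delta\big)+y\exp\big(\mu(\ln(1+y))^{1/\delta}\big)+C_{q,\varepsilon,\mu,\delta}$ for all $x,y\ge0$. In particular, (e) $xy\le\mu\exp(x/\mu)+\mu\,y\ln(1+y)$ for all $x,y\ge0$; (f) for each $q>1$ there is a constant $\bar C_{\mu,q}>0$ depending only on $(\mu,q)$ such that $y e^{x}\le\bar C_{\mu,q}\exp\big(qx^2/\mu^2\big)+y\exp\big(\mu\sqrt{\ln(1+y)}\big)$ for all $x,y\ge0$. In addition, (g) for $\delta>1$, $xy\le\mu x^\delta+\mu^{-\frac{1}{\delta-1}}y^{\delta^*}$ for all $x,y\ge0$, where $\delta^*:=\delta/(\delta-1)$. *)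

(* Defs.v *)
(* R : realType, expR, ln, powR (a `^ b, with 0 `^ b = 0 for b <> 0). *)
From HB Require Import structures.
From mathcomp Require Import all_boot all_order all_algebra.
From mathcomp Require Import all_classical all_reals all_analysis.

(* Main.v *)
Require Import Defs.
From HB Require Import structures.
From mathcomp Require Import all_boot all_order all_algebra.
From mathcomp Require Import all_classical all_reals all_analysis.
Import Order.TTheory GRing.Theory Num.Theory.
From mathcomp Require Import ring lra.
Local Open Scope ring_scope.

Ltac pos := repeat (apply: mulr_ge0 || apply: addr_ge0); try exact: powR_ge0; try exact: expR_ge0; try lra.

Section H.
Context {R : realType}.
Implicit Types a b x y r : R.

Lemma powR_root a r : 0 <= a -> r != 0 -> (a `^ r) `^ (r^-1) = a.
Proof. by move=> a0 r0; rewrite -powRrM mulfV // powRr1. Qed.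

Lemma powR_lt_root {a b r} : 0 <= a -> 0 <= b -> 0 < r -> a `^ r < b -> a < b `^ (r^-1).
Proof.
move=> a0 b0 r0 h.
rewrite -{1}(powR_root _ _ a0 (lt0r_neq0 r0)).
apply: gt0_ltr_powR => //; rewrite ?invr_gt0 ?nnegrE ?powR_ge0 //.
Qed.

Lemma powR_div a b r : 0 <= a -> 0 < b -> (a / b) `^ r = a `^ r / b `^ r.
Proof.
move=> a0 b0; rewrite powRM //; last by rewrite invr_ge0 ltW.
congr (_ * _).
rewrite -powR_inv1 ?(ltW b0) // -powRrM mulrC powRrM powR_inv1 ?powR_ge0 //.
Qed.

Lemma lnD1_ge0 {y} : 0 <= y -> 0 <= ln (1 + y).
Proof. by move=> y0; apply: ln_ge0; lra. Qed.


Lemma part_a (mu delta : R) : 0 < mu -> 0 < delta -> forall x y : R, 0 <= x -> 0 <= y ->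
     x * y <= x * expR (x `^ delta / mu `^ delta)
              + mu * y * (ln (1 + y)) `^ (delta^-1).
Proof.
move=> hmu hd x y x0 y0.
have Lg := lnD1_ge0 y0.
have B0 : 0 <= mu * y * (ln (1 + y)) `^ (delta^-1).
  by pos.
have [hy|hy] := leP y (expR (x `^ delta / mu `^ delta)).
  by apply: ler_wpDr => //; apply: ler_wpM2l.
have yp : 0 < y by apply: lt_trans hy; exact: expR_gt0.
have h1 : (x / mu) `^ delta < ln (1 + y).
  rewrite powR_div //; apply: (lt_le_trans (y := ln y)).
    by rewrite -ltr_expR lnK.
  by rewrite ler_ln ?posrE; lra.
have h2 := powR_lt_root (divr_ge0 x0 (ltW hmu)) Lg hd h1.
have h3 : x < mu * (ln (1 + y)) `^ (delta^-1).
  by rewrite -ltr_pdivrMl // mulrC.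
apply: ler_wpDl; first by pos.
by rewrite -mulrA [y * _]mulrC mulrA; apply: ler_wpM2r => //; apply: ltW.
Qed.

Lemma part_b (mu delta : R) : 0 < mu -> 0 < delta -> forall x y : R, 0 <= x -> 0 <= y ->
     x * y <= x * expR ((ln (1 + x)) `^ delta / mu `^ delta)
              + y * expR (mu * (ln (1 + y)) `^ (delta^-1)).
Proof.
move=> hmu hd x y x0 y0.
have Lg := lnD1_ge0 y0.
have Lx := lnD1_ge0 x0.
have B0 : 0 <= y * expR (mu * (ln (1 + y)) `^ (delta^-1)).
  by pos.
have [hy|hy] := leP y (expR ((ln (1 + x)) `^ delta / mu `^ delta)).
  by apply: ler_wpDr => //; apply: ler_wpM2l.
have yp : 0 < y by apply: lt_trans hy; exact: expR_gt0.
have h1 : (ln (1 + x) / mu) `^ delta < ln (1 + y).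
  rewrite powR_div //; apply: (lt_le_trans (y := ln y)).
    by rewrite -ltr_expR lnK.
  by rewrite ler_ln ?posrE; lra.
have h2 := powR_lt_root (divr_ge0 Lx (ltW hmu)) Lg hd h1.
have h3 : ln (1 + x) < mu * (ln (1 + y)) `^ (delta^-1).
  by rewrite -ltr_pdivrMl // mulrC.
have h4 : x < expR (mu * (ln (1 + y)) `^ (delta^-1)).
  apply: (lt_trans (y := 1 + x)); first lra.
  by rewrite -[1 + x]lnK ?posrE ?ltr_expR //; lra.
apply: ler_wpDl; first by pos.
by rewrite mulrC; apply: ler_wpM2l => //; apply: ltW.
Qed.


Lemma part_e (mu : R) : 0 < mu -> forall x y : R, 0 <= x -> 0 <= y ->
     x * y <= mu * expR (x / mu) + mu * y * ln (1 + y).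
Proof.
move=> hmu x y x0 y0.
have Lg := lnD1_ge0 y0.
have [->|yp] := eqVneq y 0.
  by rewrite mulr0 mulr0 mul0r addr0; pos.
have {yp}yp : 0 < y by rewrite lt_def yp y0.
have h0 : expR (x / mu) >= y * (1 + (x / mu - ln y)).
  have -> : x / mu = ln y + (x / mu - ln y) by ring.
  rewrite expRD lnK ?posrE //; apply: ler_wpM2l; first lra.
  have -> : ln y + (x / mu - ln y) - ln y = x / mu - ln y by ring.
  exact: expR_ge1Dx.
have h1 : mu * expR (x / mu) >= mu * y + x * y - mu * y * ln y.
  have -> : mu * y + x * y - mu * y * ln y = mu * (y * (1 + (x / mu - ln y))).
    by field; apply: lt0r_neq0.
  by apply: ler_wpM2l => //; lra.
have h2 : mu * y * ln y <= mu * y * ln (1 + y).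
  by apply: ler_wpM2l; [pos | rewrite ler_ln ?posrE; lra].
have h3 : 0 <= mu * y by pos.
lra.
Qed.

Lemma part_f (mu : R) : 0 < mu -> forall q : R, 1 < q ->
     exists C : R, 0 < C /\
       forall x y : R, 0 <= x -> 0 <= y ->
         y * expR x <= C * expR (q * x ^+ 2 / mu ^+ 2)
                       + y * expR (mu * Num.sqrt (ln (1 + y))).
Proof.
move=> hmu q hq.
exists (expR (mu ^+ 2 / (4 * (q - 1)))); split; first exact: expR_gt0.
move=> x y x0 y0.
have Lg := lnD1_ge0 y0.
have [hy|hy] := leP (ln (1 + y)) (x ^+ 2 / mu ^+ 2).
  apply: ler_wpDr; first by pos.
  rewrite -expRD.
  have hy' : y <= expR (x ^+ 2 / mu ^+ 2).
    apply: (le_trans (y := 1 + y)); first lra.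
    by rewrite -[1 + y]lnK ?posrE ?ler_expR //; lra.
  apply: (le_trans (y := expR (x ^+ 2 / mu ^+ 2) * expR x)).
    by apply: ler_wpM2r => //; exact: expR_ge0.
  rewrite -expRD ler_expR.
  set k := mu ^+ 2 / (q - 1).
  have kp : 0 < k by rewrite /k divr_gt0 ?exprn_gt0 //; lra.
  have hsq : 0 <= (x - k / 2) ^+ 2 / k by rewrite divr_ge0 ?sqr_ge0 // ltW.
  have -> : mu ^+ 2 / (4 * (q - 1)) + q * x ^+ 2 / mu ^+ 2 =
     x ^+ 2 / mu ^+ 2 + x + (x - k / 2) ^+ 2 / k.
    rewrite /k; field.
    apply/andP; split; apply: lt0r_neq0 => //; lra.
  lra.
apply: ler_wpDl; first by pos.
apply: ler_wpM2l => //; rewrite ler_expR -ler_pdivrMl //.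
rewrite mulrC -[x / mu]ger0_norm ?divr_ge0 ?(ltW hmu) // -sqrtr_sqr.
apply: ler_wsqrtr; rewrite expr_div_n; exact: ltW.
Qed.

Lemma part_g (mu delta : R) : 0 < mu -> 1 < delta -> forall x y : R, 0 <= x -> 0 <= y ->
     x * y <= mu * x `^ delta
              + mu `^ (- (delta - 1)^-1) * y `^ (delta / (delta - 1)).
Proof.
move=> hmu hd x y x0 y0.
have rp : 0 < delta - 1 by lra.
have [hy|hy] := leP y (mu * x `^ (delta - 1)).
  apply: ler_wpDr; first by pos.
  rewrite -(mulr_powRB1 x0 (lt_trans ltr01 hd)).
  rewrite mulrCA; apply: ler_wpM2l => //.
have yp : 0 < y by apply: le_lt_trans hy; pos.
have h1 : x `^ (delta - 1) < y / mu by rewrite ltr_pdivlMr // mulrC.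
have h2 := powR_lt_root x0 (divr_ge0 y0 (ltW hmu)) rp h1.
apply: ler_wpDl; first by pos.
have e : delta / (delta - 1) - 1 = (delta - 1)^-1.
  by field; apply: lt0r_neq0.
have dp : 0 < delta / (delta - 1) by rewrite divr_gt0 //; lra.
rewrite -(mulr_powRB1 y0 dp) e powRN.
rewrite powR_div // in h2.
rewrite mulrC [_^-1 * _]mulrC -mulrA; apply: ler_wpM2l => //.
exact: ltW.
Qed.


Lemma quad_eventually (b c : R) : 0 < b ->
  exists L0, 1 <= L0 /\ forall L, L0 <= L -> L + c <= b * L ^+ 2.
Proof.
move=> bp; exists (1 + `|c| + 2 / b).
have h1 := ler_norm c; have h2 := normr_ge0 c.
have h3 : 0 < 2 / b by rewrite divr_gt0.
split; first lra.
move=> L hL.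
have hbL : 2 <= b * L.
  have -> : 2 = b * (2 / b) by field; apply: lt0r_neq0.
  by apply: ler_wpM2l; [exact: ltW | lra].
have : 2 * L <= (b * L) * L by apply: ler_wpM2r => //; lra.
rewrite expr2 mulrA; lra.
Qed.

Lemma pow_eventually (a c delta : R) : 0 < a -> 1 < delta ->
  exists L0, 1 <= L0 /\ forall L, L0 <= L -> L + c <= a * L `^ delta.
Proof.
move=> ap hd; set s := delta - 1.
have sp : 0 < s by rewrite /s; lra.
set T := (2 / a) `^ (s^-1).
have T0 : 0 <= T := powR_ge0 _ _.
exists (1 + `|c| + T).
have h1 := ler_norm c; have h2 := normr_ge0 c.
split; first lra.
move=> L hL.
have L0 : 0 <= L by lra.
have hLs : 2 / a <= L `^ s.
  rewrite -(powR_root _ _ (_ : 0 <= 2 / a) (invr_neq0 (lt0r_neq0 sp))); last first.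
    by rewrite divr_ge0 // ltW.
  rewrite invrK; apply: ge0_ler_powR; rewrite ?nnegrE ?(ltW sp) //.
  by rewrite -/T; lra.
have haL : 2 <= a * L `^ s.
  have -> : 2 = a * (2 / a) by field; apply: lt0r_neq0.
  by apply: ler_wpM2l; [exact: ltW | exact: hLs].
rewrite -(mulr_powRB1 L0 (lt_trans ltr01 hd)) -/s.
have : 2 * L <= (a * L `^ s) * L by apply: ler_wpM2r => //; lra.
rewrite mulrCA mulrC; lra.
Qed.

Lemma grow_c (a delta eps : R) : 0 < a -> 0 < delta -> 0 < eps ->
  exists X0, 0 <= X0 /\ forall x, X0 <= x -> x <= eps * expR (a * x `^ delta).
Proof.
move=> ap dp ep.
have bp : 0 < a * delta ^+ 2 / 2 by rewrite !divr_gt0 ?mulr_gt0 ?exprn_gt0.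
have [L0 [L01 HL]] := quad_eventually _ (- ln eps) bp.
exists (expR L0); split; first exact: expR_ge0.
move=> x hx.
have xp : 0 < x by apply: lt_le_trans hx; exact: expR_gt0.
have hL : L0 <= ln x by rewrite -ler_expR lnK.
have hxd : x `^ delta = expR (delta * ln x) by rewrite /powR gt_eqF.
have hq := HL _ hL.
have he := expR_ge1Dxn 1 (_ : 0 <= delta * ln x).
have f2 : (2`!)%:R = 2 :> R by [].
rewrite f2 in he.
have he' : delta * ln x >= 0 by rewrite mulr_ge0 ?(ltW dp) //; lra.
have {}he := he he'.
have h4 : a * delta ^+ 2 / 2 * ln x ^+ 2 <= a * x `^ delta.
  rewrite hxd; have : (delta * ln x) ^+ 2 / 2 <= expR (delta * ln x) by lra.
  rewrite exprMn => hh.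
  have -> : a * delta ^+ 2 / 2 * ln x ^+ 2 = a * (delta ^+ 2 * ln x ^+ 2 / 2) by ring.
  by apply: ler_wpM2l => //; exact: ltW.
rewrite -{1}[x]lnK ?posrE // -[eps]lnK ?posrE // -expRD ler_expR; lra.
Qed.

Lemma grow_d (a delta eps : R) : 0 < a -> 1 < delta -> 0 < eps ->
  exists X0, 0 <= X0 /\ forall x, X0 <= x ->
     x <= eps * expR (a * (ln (1 + x)) `^ delta).
Proof.
move=> ap dp ep.
have [L0 [L01 HL]] := pow_eventually _ (- ln eps) _ ap dp.
exists (expR L0); split; first exact: expR_ge0.
move=> x hx.
have xp : 0 < x by apply: lt_le_trans hx; exact: expR_gt0.
have hL : L0 <= ln (1 + x).
  by rewrite -ler_expR lnK ?posrE; lra.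
have hq := HL _ hL.
apply: (le_trans (y := 1 + x)); first lra.
rewrite -{1}[1 + x]lnK ?posrE; last lra.
rewrite -[eps]lnK ?posrE // -expRD ler_expR; lra.
Qed.

Lemma finish (E F : R -> R) (X0 : R) : 0 <= X0 ->
  (forall x, 0 <= x -> 0 <= E x) ->
  (forall x z, 0 <= x -> x <= z -> E x <= E z) ->
  (forall x, X0 <= x -> x * E x <= F x) ->
  (forall x, 0 <= F x) ->
  forall x, 0 <= x -> x * E x <= F x + (1 + X0 * E X0).
Proof.
move=> X00 E0 Em Hg F0 x x0.
have [h|h] := leP X0 x.
  have := Hg _ h; have := E0 _ X00; have : 0 <= X0 * E X0 by pos; exact: E0.
  lra.
have : x * E x <= X0 * E X0.
  by apply: ler_pM => //; [exact: E0 | exact: ltW | apply: Em => //; exact: ltW].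
have := F0 x; lra.
Qed.


Lemma part_c (mu delta : R) : 0 < mu -> 0 < delta ->
  forall q eps : R, 1 < q -> 0 < eps ->
     exists C : R, 0 < C /\
       forall x y : R, 0 <= x -> 0 <= y ->
         x * y <= eps * expR (q * x `^ delta / mu `^ delta)
                  + mu * y * (ln (1 + y)) `^ (delta^-1) + C.
Proof.
move=> hmu hd q eps hq he.
have md : 0 < mu `^ delta by rewrite powR_gt0.
pose a := (q - 1) / mu `^ delta.
have ap : 0 < a by rewrite /a divr_gt0 //; lra.
have [X0 [X00 HX]] := grow_c _ _ _ ap hd he.
pose E := fun x => expR (x `^ delta / mu `^ delta).
pose F := fun x => eps * expR (q * x `^ delta / mu `^ delta).
exists (1 + X0 * expR (X0 `^ delta / mu `^ delta)); split.
  have : 0 <= X0 * expR (X0 `^ delta / mu `^ delta) by pos.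
  lra.
have h2 : forall u v, 0 <= u -> u <= v -> E u <= E v.
  move=> u v u0 uv; rewrite /E ler_expR; apply: ler_wpM2r.
    by rewrite invr_ge0 ltW.
  by apply: ge0_ler_powR; rewrite ?nnegrE ?(ltW hd) //; lra.
have h3 : forall u, X0 <= u -> u * E u <= F u.
  move=> u hu; have hh := HX u hu.
  apply: (le_trans (y := eps * expR (a * u `^ delta) * expR (u `^ delta / mu `^ delta))).
    by apply: ler_wpM2r => //; exact: expR_ge0.
  rewrite /F -mulrA -expRD.
  have -> : a * u `^ delta + u `^ delta / mu `^ delta = q * u `^ delta / mu `^ delta.
    by rewrite /a; field; apply: lt0r_neq0.
  exact: le_refl.
have h4 : forall u, 0 <= F u by move=> u; rewrite /F; pos.
move=> x y x0 y0.
have Ha := part_a _ _ hmu hd x y x0 y0.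
have Hf := finish E F X0 X00 (fun u _ => expR_ge0 _) h2 h3 h4 x x0.
rewrite /E /F /= in Hf; lra.
Qed.


Lemma part_d (mu delta : R) : 0 < mu -> 0 < delta ->
  1 < delta -> forall q eps : R, 1 < q -> 0 < eps ->
     exists C : R, 0 < C /\
       forall x y : R, 0 <= x -> 0 <= y ->
         x * y <= eps * expR (q * (ln (1 + x)) `^ delta / mu `^ delta)
                  + y * expR (mu * (ln (1 + y)) `^ (delta^-1)) + C.
Proof.
move=> hmu hd hd1 q eps hq he.
have md : 0 < mu `^ delta by rewrite powR_gt0.
pose a := (q - 1) / mu `^ delta.
have ap : 0 < a by rewrite /a divr_gt0 //; lra.
have [X0 [X00 HX]] := grow_d _ _ _ ap hd1 he.
pose E := fun x => expR ((ln (1 + x)) `^ delta / mu `^ delta).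
pose F := fun x => eps * expR (q * (ln (1 + x)) `^ delta / mu `^ delta).
exists (1 + X0 * expR ((ln (1 + X0)) `^ delta / mu `^ delta)); split.
  have : 0 <= X0 * expR ((ln (1 + X0)) `^ delta / mu `^ delta) by pos.
  lra.
have h2 : forall u v, 0 <= u -> u <= v -> E u <= E v.
  move=> u v u0 uv; rewrite /E ler_expR; apply: ler_wpM2r.
    by rewrite invr_ge0 ltW.
  apply: ge0_ler_powR; rewrite ?nnegrE ?(ltW hd) ?lnD1_ge0 //; try lra.
  by rewrite ler_ln ?posrE; lra.
have h3 : forall u, X0 <= u -> u * E u <= F u.
  move=> u hu; have hh := HX u hu.
  apply: (le_trans (y := eps * expR (a * (ln (1 + u)) `^ delta) * E u)).
    by apply: ler_wpM2r => //; exact: expR_ge0.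
  rewrite /F /E -mulrA -expRD.
  have -> : a * (ln (1 + u)) `^ delta + (ln (1 + u)) `^ delta / mu `^ delta
     = q * (ln (1 + u)) `^ delta / mu `^ delta.
    by rewrite /a; field; apply: lt0r_neq0.
  exact: le_refl.
have h4 : forall u, 0 <= F u by move=> u; rewrite /F; pos.
move=> x y x0 y0.
have Ha := part_b _ _ hmu hd x y x0 y0.
have Hf := finish E F X0 X00 (fun u _ => expR_ge0 _) h2 h3 h4 x x0.
rewrite /E /F /= in Hf; lra.
Qed.

End H.

Theorem proposition4p1 (R : realType) (mu delta : R) (hmu : 0 < mu) (hdelta : 0 < delta) :
  (* (a) *)
  (forall x y : R, 0 <= x -> 0 <= y ->
     x * y <= x * expR (x `^ delta / mu `^ delta)
              + mu * y * (ln (1 + y)) `^ (delta^-1)) /\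
  (* (b) *)
  (forall x y : R, 0 <= x -> 0 <= y ->
     x * y <= x * expR ((ln (1 + x)) `^ delta / mu `^ delta)
              + y * expR (mu * (ln (1 + y)) `^ (delta^-1))) /\
  (* (c) *)
  (forall q eps : R, 1 < q -> 0 < eps ->
     exists C : R, 0 < C /\
       forall x y : R, 0 <= x -> 0 <= y ->
         x * y <= eps * expR (q * x `^ delta / mu `^ delta)
                  + mu * y * (ln (1 + y)) `^ (delta^-1) + C) /\
  (* (d) *)
  (1 < delta -> forall q eps : R, 1 < q -> 0 < eps ->
     exists C : R, 0 < C /\
       forall x y : R, 0 <= x -> 0 <= y ->
         x * y <= eps * expR (q * (ln (1 + x)) `^ delta / mu `^ delta)
                  + y * expR (mu * (ln (1 + y)) `^ (delta^-1)) + C) /\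
  (* (e) *)
  (forall x y : R, 0 <= x -> 0 <= y ->
     x * y <= mu * expR (x / mu) + mu * y * ln (1 + y)) /\
  (* (f) *)
  (forall q : R, 1 < q ->
     exists C : R, 0 < C /\
       forall x y : R, 0 <= x -> 0 <= y ->
         y * expR x <= C * expR (q * x ^+ 2 / mu ^+ 2)
                       + y * expR (mu * Num.sqrt (ln (1 + y)))) /\
  (* (g) *)
  (1 < delta -> forall x y : R, 0 <= x -> 0 <= y ->
     x * y <= mu * x `^ delta
              + mu `^ (- (delta - 1)^-1) * y `^ (delta / (delta - 1))).
Proof.
split; first exact: part_a.
split; first exact: part_b.
split; first exact: part_c.
split; first exact: part_d.
split; first exact: part_e.
split; first exact: part_f.
exact: part_g.
Qed.
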